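(* Let $\mathcal H=(H=A\oplus B,(\cdot,\cdot),x\mapsto x^*,U)$ be a structure algebra. For $a\in A$ let $\phi(a)\in B$ be the unique element with $(\phi(a),b)=(a,b)$ for all $b\in B$. Then $\phi:A\to B$ is an algebra homomorphism from $A$ into the center of $B$, and $ab=\phi(a)b$ for all $a\in A$, $b\in B$.
   Context: All vector spaces are finite-dimensional over $\mathbb C$. For an associative algebra $X$ with a symmetric invariant ($(xy,z)=(x,yz)$) bilinear form nondegenerate on $X$, basis $(e_i)$, Gram matrix $F_{ij}=(e_i,e_j)$ with inverse $(F^{ij})$, put $K_X=\sum F^{ij}e_ie_j$, $V_{K_X}(x)=\sum F^{ij}e_ixe_j$, and for an involutive antiautomorphism $*$ ($(x^* )^*=x$, $(xy)^*=y^*x^*$), $K_{X,*}=\sum F^{ij}e_ie_j^*$. A structure algebra is a tuple $(H=A\oplus B,(\cdot,\cdot),x\mapsto x^*,U)$ where $H$ is a finite-dimensional associative algebra, $H=A\oplus B$ is a decomposition into vector subspaces, $(\cdot,\cdot)$ is a symmetric invariant bilinear form on $H$, $*$ is an involutive antiautomorphism of $H$ and $U\in A$, such that: (1) $A$ is a subalgebra contained in the center of $H$ and its unit $1_A$ is the unit of $H$; (2) $B$ is a two-sided ideal with a unit $1_B$; (3) the restrictions of $(\cdot,\cdot)$ to $A$ and to $B$ are nondegenerate; (4) $(V_{K_B}(b_1),b_2)=\sum_{i,j}F^{ij}(e_i,b_1)(e_j,b_2)$ for all $b_1,b_2\in B$, where $(e_i)$ is a basis of $A$ and $F^{ij}$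 the inverse Gram matrix of $(\cdot,\cdot)|_A$; (5) $A^*=A$, $B^*=B$, $(x^*,y^* )=(x,y)$; (6) $U^2=K_{A,*}$; (7) $(U,b)=(K_{B,*},b)$ for all $b\in B$; (8) $(aU)^*=aU$ for all $a\in A$. (All of $K_A,K_{A,*},V_{K_B},K_{B,*}$ are computed inside $A$ or $B$ with the restricted form and involution.) *)

(* Defs.v *)
From HB Require Import structures.
From mathcomp Require Import all_boot all_order all_algebra falgebra.
Set Implicit Arguments. Unset Strict Implicit. Unset Printing Implicit Defensive.
Import GRing.Theory Num.Theory.
Local Open Scope ring_scope.


Section StructureAlgebraDefs.
Variables (C : fieldType) (H : falgType C).

Definition bas (X : {vspace H}) (i : 'I_(\dim X)) : H := tnth (vbasis X) i.

Definition gram (f : H -> H -> C) (X : {vspace H}) : 'M[C]_(\dim X) :=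
  \matrix_(i, j) f (bas i) (bas j).

Definition igram (f : H -> H -> C) (X : {vspace H}) : 'M[C]_(\dim X) :=
  invmx (gram f X).

Definition K_ (f : H -> H -> C) (X : {vspace H}) : H :=
  \sum_(i < \dim X) \sum_(j < \dim X) igram f X i j *: (bas i * bas j).

Definition V_K (f : H -> H -> C) (X : {vspace H}) (x : H) : H :=
  \sum_(i < \dim X) \sum_(j < \dim X) igram f X i j *: (bas i * x * bas j).

Definition K_star (f : H -> H -> C) (star : H -> H) (X : {vspace H}) : H :=
  \sum_(i < \dim X) \sum_(j < \dim X) igram f X i j *: (bas i * star (bas j)).

(* The tuple (H = A (+) B, (.,.), *, U) with unit 1_B = eB is a structure algebra. *)
Definition structure_algebra (A B : {vspace H}) (f : H -> H -> C)
    (star : H -> H) (U eB : H) : Prop :=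
  ((A + B = fullv)%VS /\ (A :&: B = 0)%VS) /\
  [/\ forall x y, f x y = f y x,
      forall k x y z, f (k *: x + y) z = k * f x z + f y z
    & forall x y z, f (x * y) z = f x (y * z)] /\
  [/\ forall k x y, star (k *: x + y) = k *: star x + star y,
      forall x, star (star x) = x
    & forall x y, star (x * y) = star y * star x] /\
  [/\ (1 \in A), (forall a a', a \in A -> a' \in A -> a * a' \in A)
    & forall a x, a \in A -> a * x = x * a] /\
  [/\ forall x b, b \in B -> x * b \in B /\ b * x \in B,
      eB \in B & forall b, b \in B -> eB * b = b /\ b * eB = b] /\
  [/\ forall a, a \in A -> (forall a', a' \in A -> f a a' = 0) -> a = 0
    & forall b, b \in B -> (forall b', b' \in B -> f b b' = 0) -> b = 0] /\
  (forall b1 b2, b1 \in B -> b2 \in B ->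
     f (V_K f B b1) b2 =
     \sum_(i < \dim A) \sum_(j < \dim A)
        igram f A i j * f (bas i) b1 * f (bas j) b2) /\
  [/\ forall a, a \in A -> star a \in A,
      forall b, b \in B -> star b \in B
    & forall x y, f (star x) (star y) = f x y] /\
  [/\ U \in A, U * U = K_star f star A,
      forall b, b \in B -> f U b = f (K_star f star B) b
    & forall a, a \in A -> star (a * U) = a * U].

End StructureAlgebraDefs.

(* Main.v *)
Require Import Defs.
From HB Require Import structures.
From mathcomp Require Import all_boot all_order all_algebra falgebra.
Import GRing.Theory Num.Theory.
Local Open Scope ring_scope.

Theorem lemma2p1 (C : numClosedFieldType) (H : falgType C)
    (A B : {vspace H}) (f : H -> H -> C) (star : H -> H) (U eB : H)
    (hH : structure_algebra A B f star U eB)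
    (phi : H -> H)
    (hphi : forall a, a \in A ->
       phi a \in B /\ (forall b, b \in B -> f (phi a) b = f a b)) :
  [/\ (* phi is an algebra homomorphism A -> B (unital: 1_A |-> 1_B) *)
      forall k a a', a \in A -> a' \in A -> phi (k *: a + a') = k *: phi a + phi a',
      forall a a', a \in A -> a' \in A -> phi (a * a') = phi a * phi a',
      phi 1 = eB,
      (* with values in the center of B *)
      forall a b, a \in A -> b \in B -> phi a * b = b * phi a
    & (* a b = phi(a) b *)
      forall a b, a \in A -> b \in B -> a * b = phi a * b].
Proof.
move: hH => [_ [[fsym flin finv] [_ [[A1 Amul Acen] [[Bid eBB eBu] [[_ Bnd] _]]]]]].
have f0 : forall z, f 0 z = 0.
  move=> z; have := flin 1 0 0 z; rewrite scale1r addr0 mul1r => h.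
  by apply: (@addrI _ (f 0 z)); rewrite addr0 -h.
have fN : forall y z, f (- y) z = - f y z.
  by move=> y z; have := flin (-1) y 0 z; rewrite scaleN1r addr0 f0 addr0 mulN1r.
have fsub : forall x y z, f (x - y) z = f x z - f y z.
  by move=> x y z; have := flin 1 x (- y) z; rewrite scale1r mul1r fN.
have phiE : forall a, a \in A -> phi a = a * eB.
  move=> a aA; have [pB pf] := hphi a aA.
  have aeB : a * eB \in B by case: (Bid a eB eBB).
  apply/eqP; rewrite -subr_eq0; apply/eqP; apply: Bnd; first exact: memvB.
  move=> b' bB; rewrite fsub pf // finv.
  by have [-> _] := eBu b' bB; rewrite subrr.
have eBeB : eB * eB = eB by have [-> _] := eBu eB eBB.
split.
- move=> k a a' aA aA'; rewrite !phiE //; last by rewrite memvD // memvZ.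
  by rewrite mulrDl -scalerAl.
- move=> a a' aA aA'; rewrite !phiE //; last exact: Amul.
  by rewrite (mulrA (a * eB) a' eB) -(mulrA a eB a') -(Acen a' eB aA') mulrA -(mulrA (a * a') eB eB) eBeB.
- by rewrite phiE // mul1r.
- move=> a b aA bB; rewrite phiE // -mulrA.
  have [-> h2] := eBu b bB.
  by rewrite mulrA -(Acen a b aA) -mulrA h2.
- move=> a b aA bB; rewrite phiE // -mulrA.
  by have [-> _] := eBu b bB.
Qed.
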